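(* Let $\alpha$ be a cylindric partition on $\mathcal C_{k,n}$ and $m$ a nonnegative integer. Let $M$ be the set of cylindric partitions $\mu\subseteq\alpha$ such that $\alpha/\mu$ contains exactly $m$ boxes, and $\Lambda$ the set of cylindric partitions $\lambda\supseteq\alpha$ such that $\lambda/\alpha$ contains exactly $m$ boxes. Then \[ \sum_{\mu\in M}f_{\alpha/\mu}=\sum_{\lambda\in\Lambda}f_{\lambda/\alpha}. \]
   Context: Fix integers $n>k\ge1$. A cylindric partition is a weakly decreasing integer sequence $(\lambda_m)_{m\in\mathbb Z}$ with $\lambda_m=\lambda_{m+k}+n-k$. A point $(x,y)\in\mathbb Z^2$ lies in $\lambda$ if $y\le\lambda_x$. Boxes are classes of points modulo translation by multiples of $(-k,n-k)$; $\pi$ the projection; a box lies in $\lambda$ iff its representatives do. $\mu\subseteq\lambda$ means $\mu_m\le\lambda_m$ for all $m$; boxes of $\lambda/\mu$ are boxes in $\lambda$ not in $\mu$. A semistandard cylindric tableau of shape $\lambda/\mu$ with values in a totally ordered set is a map $R$ from boxes of $\lambda/\mu$ to it with $R(\pi(x,y_1))\le R(\pi(x,y_2))$ whenever $(x,y_1),(x,y_2)$ lie in $\lambda$ but not $\mu$ and $y_1<y_2$, and $R(\pi(x_1,y))<R(\pi(x_2,y))$ whenever $(x_1,y),(x_2,y)$ lie in $\lambda$ but not $\mu$ and $x_1<x_2$. A standard cylindric tableau takes values in $\{1,\dots,N\}$ for some $N\ge0$ with each value used exactly once; $f_{\lambda/\mu}$ is the number of standard cylindric tableaux of shape $\lambda/\mu$.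 *)

(* Defs.v *)
From HB Require Import structures.
From mathcomp Require Import all_boot all_order all_algebra.
From mathcomp Require Import boolp classical_sets fsbigop.
Set Implicit Arguments. Unset Strict Implicit. Unset Printing Implicit Defensive.
Import Order.TTheory GRing.Theory Num.Theory.
Local Open Scope ring_scope.

Definition cylindric (k n : nat) (lam : int -> int) : Prop :=
  (forall m : int, lam (m + 1) <= lam m) /\
  (forall m : int, lam m = lam (m + k%:Z) + (n%:Z - k%:Z)).

Definition subpart (mu lam : int -> int) : Prop := forall m : int, mu m <= lam m.

Definition in_part (lam : int -> int) (p : int * int) : bool := p.2 <= lam p.1.

Definition in_skew (lam mu : int -> int) (p : int * int) : bool :=
  in_part lam p && ~~ in_part mu p.

(* projection pi of a point to its box, represented by the unique point of
   its class (modulo translations by multiples of (-k, n-k)) whose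
   x-coordinate lies in {0, ..., k-1} *)
Definition proj (k n : nat) (p : int * int) : int * int :=
  let j := (p.1 %/ k%:Z)%Z in (p.1 - j * k%:Z, p.2 + j * (n%:Z - k%:Z)).

(* The boxes of lam/mu, listed by their canonical representatives
   (column x in {0,...,k-1}, mu_x < y <= lam_x). *)
Definition skew_boxes (k : nat) (lam mu : int -> int) : seq (int * int) :=
  flatten [seq [seq p <- [seq (i%:Z, mu i%:Z + (j.+1)%:Z) | j <- iota 0 `|lam i%:Z - mu i%:Z|%N]
               | in_skew lam mu p]
          | i <- iota 0 k].

Definition nboxes (k : nat) (lam mu : int -> int) : nat := size (skew_boxes k lam mu).

(* A standard cylindric tableau of shape lam/mu with N = nboxes boxes is a
   map R from the boxes to {1,...,N} using each value exactly once; we encode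
   the box number i (i-th element of skew_boxes) and the value v+1 by the
   ordinal v : 'I_N. *)
Definition tab_val (k n : nat) (lam mu : int -> int)
  (R : {ffun 'I_(nboxes k lam mu) -> 'I_(nboxes k lam mu)}) (p : int * int) : nat :=
  match insub (index (proj k n p) (skew_boxes k lam mu)) with
  | Some i => (R i).+1
  | None => 0%N
  end.

Definition standard_tableau (k n : nat) (lam mu : int -> int)
  (R : {ffun 'I_(nboxes k lam mu) -> 'I_(nboxes k lam mu)}) : Prop :=
  injective R /\
  (forall x y1 y2 : int, in_skew lam mu (x, y1) -> in_skew lam mu (x, y2) -> y1 < y2 ->
     (tab_val n R (x, y1) <= tab_val n R (x, y2))%N) /\
  (forall x1 x2 y : int, in_skew lam mu (x1, y) -> in_skew lam mu (x2, y) -> x1 < x2 ->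
     (tab_val n R (x1, y) < tab_val n R (x2, y))%N).

Definition f_skew (k n : nat) (lam mu : int -> int) : nat :=
  #|[set R : {ffun 'I_(nboxes k lam mu) -> 'I_(nboxes k lam mu)}
        | `[< standard_tableau n R >] ]|.

(* Main.v *)
Require Import Defs.
From HB Require Import structures.
From mathcomp Require Import all_boot all_order all_algebra.
From mathcomp Require Import boolp classical_sets fsbigop.
From mathcomp Require Import functions cardinality.
From mathcomp Require Import zify ring lra.
Import Order.TTheory GRing.Theory Num.Theory.
Local Open Scope ring_scope.


Set Implicit Arguments. Unset Strict Implicit. Unset Printing Implicit Defensive.

Section Geo.
Variables (k n : nat).

Local Notation cyl := (cylindric k n).
Local Notation dd := (n%:Z - k%:Z).

Lemma dd_gt0 (hkn : (k < n)%N) : 0 < dd.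
Proof. lia. Qed.

Lemma kz_neq0 (hk : (1 <= k)%N) : k%:Z != 0.
Proof. lia. Qed.

Lemma cyl_shiftN nu (c : cyl nu) (m : nat) x :
  nu (x + m%:Z * k%:Z) = nu x - m%:Z * dd.
Proof.
elim: m x => [|m IH] x; first by rewrite !mul0r addr0 subr0.
have -> : x + (m.+1)%:Z * k%:Z = (x + m%:Z * k%:Z) + k%:Z.
  by rewrite -addn1 PoszD mulrDl mul1r addrA.
have := c.2 (x + m%:Z * k%:Z); rewrite IH => h.
have -> : (m.+1)%:Z * dd = m%:Z * dd + dd by rewrite -addn1 PoszD mulrDl mul1r.
by rewrite opprD addrA h addrK.
Qed.

Lemma cyl_shift nu (c : cyl nu) (t : int) x :
  nu (x + t * k%:Z) = nu x - t * dd.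
Proof.
case: t => m; first exact: cyl_shiftN.
rewrite NegzE.
have := cyl_shiftN c m.+1 (x + - (m.+1)%:Z * k%:Z).
have -> : x + - (m.+1)%:Z * k%:Z + (m.+1)%:Z * k%:Z = x by rewrite mulNr addrNK.
move=> h; rewrite h; by rewrite !mulNr opprK subrK.
Qed.

Lemma cyl_per nu (c : cyl nu) x :
  nu x = nu (x %% k%:Z)%Z - (x %/ k%:Z)%Z * dd.
Proof.
rewrite -cyl_shift // addrC -divz_eq //.
Qed.

Lemma cyl_mono nu (c : cyl nu) x y : x <= y -> nu y <= nu x.
Proof.
move=> xy; have [m hm] : exists m : nat, y = x + m%:Z.
  by exists `|y - x|%N; lia.
rewrite {xy}hm; elim: m => [|m IH]; first by rewrite addr0.
apply: le_trans IH; have := c.1 (x + m%:Z).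
by rewrite -addrA -(PoszD m 1) addn1.
Qed.

Definition E (j : nat) (x : int) : int := if (x %% k%:Z)%Z == j%:Z then 1 else 0.

Lemma E_ge0 j x : 0 <= E j x.
Proof. by rewrite /E; case: ifP. Qed.

Lemma E_le1 j x : E j x <= 1.
Proof. by rewrite /E; case: ifP. Qed.

Lemma E_shift j x t : E j (x + t * k%:Z) = E j x.
Proof. by rewrite /E addrC modzMDl. Qed.

Lemma E_small j (x : int) : 0 <= x -> x < k%:Z -> E j x = if x == j%:Z then 1 else 0.
Proof. by move=> h1 h2; rewrite /E modz_small ?h1. Qed.

Lemma E_eq1 j x : E j x = 1 -> x = j%:Z + (x %/ k%:Z)%Z * k%:Z.
Proof.
rewrite /E; case: eqP => // h _.
by rewrite {1}(divz_eq x k%:Z) h addrC.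
Qed.

Lemma E_adj1 j x : E j x = 1 -> E j (x + 1) = 1 -> k = 1%N.
Proof.
rewrite /E; case: eqP => // h1 _; case: eqP => // h2 _.
have : ((x + 1) == x %[mod k%:Z])%Z by apply/eqP; rewrite h1 h2.
rewrite eqz_mod_dvd addrC addKr dvdz1; lia.
Qed.

Lemma E_jj j : (j < k)%N -> E j j%:Z = 1.
Proof. move=> h; rewrite E_small ?eqxx //; lia. Qed.

Lemma E_ij i j : (i < k)%N -> i != j -> E j i%:Z = 0.
Proof. move=> h ne; rewrite E_small; [|lia|lia]; case: eqP => // /eqP; lia. Qed.

Definition addE (nu : int -> int) j := fun x => nu x + E j x.
Definition subE (nu : int -> int) j := fun x => nu x - E j x.

Lemma cyl_k1 nu (c : cyl nu) x : k = 1%N -> nu (x + 1) = nu x - dd.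
Proof. move=> k1; have := cyl_shift c 1 x; rewrite k1 !mul1r; exact. Qed.

Lemma cyl_subE nu (c : cyl nu) j : (j < k)%N -> nu (j%:Z + 1) < nu j%:Z -> cyl (subE nu j).
Proof.
move=> jk hj; split => x; last first.
  rewrite /subE; have := E_shift j x 1; rewrite mul1r => ->.
  have := c.2 x; lia.
rewrite /subE; have := E_ge0 j (x + 1); have := c.1 x.
case: (boolP (E j x == 1)) => [/eqP h1|h1].
  have hx := E_eq1 h1.
  have h2 : nu (x + 1) < nu x.
    rewrite hx; move: (x %/ k%:Z)%Z => t.
    by rewrite (cyl_shift c) addrAC (cyl_shift c) ltrD2r.
  lia.
have : E j x = 0 by rewrite /E in h1 *; case: ifP h1.
lia.
Qed.

Lemma cyl_addE nu (c : cyl nu) j : (j < k)%N -> nu j%:Z < nu (j%:Z - 1) -> cyl (addE nu j).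
Proof.
move=> jk hj; split => x; last first.
  rewrite /addE; have := E_shift j x 1; rewrite mul1r => ->.
  have := c.2 x; lia.
rewrite /addE; have := E_ge0 j x; have := c.1 x.
case: (boolP (E j (x + 1) == 1)) => [/eqP h1|h1].
  have hx := E_eq1 h1.
  have h2 : nu (x + 1) < nu x.
    move: hx; move: ((x + 1) %/ k%:Z)%Z => t hx.
    have ex : x = (j%:Z - 1) + t * k%:Z.
      by apply: (addIr 1); rewrite hx addrAC subrK.
    rewrite hx ex (cyl_shift c) [in X in _ < X](cyl_shift c) ltrD2r //.
  lia.
have : E j (x + 1) = 0 by rewrite /E in h1 *; case: ifP h1.
lia.
Qed.

Lemma subE_rem (hkn : (k < n)%N) nu (c : cyl nu) j : (j < k)%N -> cyl (subE nu j) -> nu (j%:Z + 1) < nu j%:Z.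
Proof.
move=> jk [c1 _]; have := c1 j%:Z; rewrite /subE E_jj //.
have := E_le1 j (j%:Z + 1).
case: (boolP (E j (j%:Z + 1) == 1)) => [/eqP h1|h1].
  have k1 := E_adj1 (E_jj jk) h1.
  rewrite (cyl_k1 c _ k1); have := dd_gt0 hkn; lia.
have : E j (j%:Z + 1) = 0 by rewrite /E in h1 *; case: ifP h1.
lia.
Qed.

Lemma addE_add (hkn : (k < n)%N) nu (c : cyl nu) j : (j < k)%N -> cyl (addE nu j) -> nu j%:Z < nu (j%:Z - 1).
Proof.
move=> jk [c1 _]; have := c1 (j%:Z - 1); rewrite /addE subrK E_jj //.
have := E_le1 j (j%:Z - 1).
case: (boolP (E j (j%:Z - 1) == 1)) => [/eqP h1|h1].
  have k1 : k = 1%N by apply: (E_adj1 h1); rewrite subrK E_jj.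
  have := cyl_k1 c (j%:Z - 1) k1; rewrite subrK; have := dd_gt0 hkn; lia.
have : E j (j%:Z - 1) = 0 by rewrite /E in h1 *; case: ifP h1.
lia.
Qed.


Lemma E01 j x : E j x = 0 \/ E j x = 1.
Proof. by rewrite /E; case: ifP; [right|left]. Qed.

Lemma cyl_subE_iff (hkn : (k < n)%N) nu (c : cyl nu) j : (j < k)%N ->
  `[< cyl (subE nu j) >] = (nu (j%:Z + 1) < nu j%:Z).
Proof.
move=> jk; apply/idP/idP => [/asboolP h|h]; first exact: subE_rem.
by apply/asboolP; apply: cyl_subE.
Qed.

Lemma cyl_addE_iff (hkn : (k < n)%N) nu (c : cyl nu) j : (j < k)%N ->
  `[< cyl (addE nu j) >] = (nu j%:Z < nu (j%:Z - 1)).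
Proof.
move=> jk; apply/idP/idP => [/asboolP h|h]; first exact: addE_add.
by apply/asboolP; apply: cyl_addE.
Qed.

Lemma addE_subE nu i j : addE (subE nu j) i = subE (addE nu i) j.
Proof. by apply/funext => x; rewrite /addE /subE addrAC. Qed.

Lemma addEK nu j : subE (addE nu j) j = nu.
Proof. by apply/funext => x; rewrite /addE /subE addrK. Qed.

Lemma subEK nu j : addE (subE nu j) j = nu.
Proof. by apply/funext => x; rewrite /addE /subE subrK. Qed.

Lemma off_sub nu (c : cyl nu) i j : (i < k)%N -> (j < k)%N -> i != j ->
  cyl (subE (addE nu i) j) -> cyl (subE nu j).
Proof.
move=> ik jk ne [c1 _]; apply: cyl_subE => //.
have := c1 j%:Z; rewrite /subE /addE E_jj // E_ij //.
have : E j (j%:Z + 1) = 0.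
  case: (E01 j (j%:Z + 1)) => // h.
  have k1 := E_adj1 (E_jj jk) h; exfalso; move: ne; rewrite k1 in ik jk; lia.
have := E_ge0 i (j%:Z + 1); lia.
by rewrite eq_sym.
Qed.

Lemma off_add nu (c : cyl nu) i j : (i < k)%N -> (j < k)%N -> i != j ->
  cyl (subE (addE nu i) j) -> cyl (addE nu i).
Proof.
move=> ik jk ne [c1 _]; apply: cyl_addE => //.
have := c1 (i%:Z - 1); rewrite /subE /addE subrK E_jj // E_ij //.
have : E i (i%:Z - 1) = 0.
  case: (E01 i (i%:Z - 1)) => // h.
  have k1 : k = 1%N by apply: (E_adj1 h); rewrite subrK E_jj.
  exfalso; move: ne; rewrite k1 in ik jk; lia.
have := E_ge0 j (i%:Z - 1); lia.
Qed.

Definition Uop (phi : (int -> int) -> nat) (nu : int -> int) : nat :=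
  \sum_(j < k) (if `[< cyl (addE nu j) >] then phi (addE nu j) else 0%N).
Definition Dop (phi : (int -> int) -> nat) (nu : int -> int) : nat :=
  \sum_(j < k) (if `[< cyl (subE nu j) >] then phi (subE nu j) else 0%N).

Lemma if_sum (b : bool) (F : 'I_k -> nat) :
  (if b then \sum_(i < k) F i else 0%N) = \sum_(i < k) (if b then F i else 0%N).
Proof. by case: b => //; rewrite big1. Qed.

Lemma count_eq (hk : (1 <= k)%N) (hkn : (k < n)%N) nu (c : cyl nu) (a : nat) :
  \sum_(j < k) (if `[< cyl (subE nu j) >] then a else 0%N) =
  \sum_(j < k) (if `[< cyl (addE nu j) >] then a else 0%N).
Proof.
under eq_bigr => j _ do rewrite (cyl_subE_iff hkn c (ltn_ord j)).
under [RHS]eq_bigr => j _ do rewrite (cyl_addE_iff hkn c (ltn_ord j)).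
have [k' kk] : exists k', k = k'.+1 by exists k.-1; lia.
rewrite kk.
rewrite big_ord_recr big_ord_recl /= addrC; congr (_ + _); last first.
  apply: eq_bigr => i _ /=.
  by rewrite /bump /= add1n -addn1 PoszD addrK.
have -> : nu (-1) = nu (k'%:Z) + dd.
  have e : (-1 : int) + k%:Z = k'%:Z by lia.
  by have := c.2 (-1); rewrite e.
have -> : nu 0 = nu (k'%:Z + 1) + dd.
  have e : (0 : int) + k%:Z = k'%:Z + 1 by lia.
  by have := c.2 0; rewrite e.
by rewrite ltrD2r.
Qed.

Lemma DU (hk : (1 <= k)%N) (hkn : (k < n)%N) phi nu : cyl nu -> Dop (Uop phi) nu = Uop (Dop phi) nu.
Proof.
move=> c; rewrite /Dop /Uop.
under eq_bigr do rewrite if_sum.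
under [RHS]eq_bigr do rewrite if_sum.
rewrite [RHS]exchange_big /=.
have step : forall j : 'I_k,
  \sum_(i < k) (if `[< cyl (subE nu j) >] then
        (if `[< cyl (addE (subE nu j) i) >] then phi (addE (subE nu j) i) else 0%N) else 0%N)
  = (if `[< cyl (subE nu j) >] then phi nu else 0%N) +
    \sum_(i < k | i != j) (if `[< cyl (subE (addE nu i) j) >] then phi (subE (addE nu i) j) else 0%N).
  move=> j; rewrite (bigD1 j) //= subEK; congr (_ + _).
    by case: asboolP => //= _; case: asboolP.
  apply: eq_bigr => i ne; rewrite addE_subE.
  case: (asboolP (cyl (subE (addE nu i) j))) => h; last by case: ifP.
  case: asboolP => // hn; exfalso; apply: hn.
  exact: (off_sub c (ltn_ord i) (ltn_ord j) ne h).
have step2 : forall j : 'I_k,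
  \sum_(i < k) (if `[< cyl (addE nu i) >] then
        (if `[< cyl (subE (addE nu i) j) >] then phi (subE (addE nu i) j) else 0%N) else 0%N)
  = (if `[< cyl (addE nu j) >] then phi nu else 0%N) +
    \sum_(i < k | i != j) (if `[< cyl (subE (addE nu i) j) >] then phi (subE (addE nu i) j) else 0%N).
  move=> j; rewrite (bigD1 j) //= addEK; congr (_ + _).
    by case: asboolP => //= _; case: asboolP.
  apply: eq_bigr => i ne.
  case: (asboolP (cyl (subE (addE nu i) j))) => h; last by case: ifP.
  case: asboolP => // hn; exfalso; apply: hn.
  exact: (off_add c (ltn_ord i) (ltn_ord j) ne h).
rewrite (eq_bigr _ (fun j _ => step j)) [RHS](eq_bigr _ (fun j _ => step2 j)).
by rewrite !big_split /= count_eq.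
Qed.

Lemma U_ext phi1 phi2 : (forall nu, cyl nu -> phi1 nu = phi2 nu) ->
  forall nu, cyl nu -> Uop phi1 nu = Uop phi2 nu.
Proof.
move=> h nu c; apply: eq_bigr => j _; case: asboolP => // h'; exact: h.
Qed.

Lemma D_ext phi1 phi2 : (forall nu, cyl nu -> phi1 nu = phi2 nu) ->
  forall nu, cyl nu -> Dop phi1 nu = Dop phi2 nu.
Proof.
move=> h nu c; apply: eq_bigr => j _; case: asboolP => // h'; exact: h.
Qed.

Lemma Upow_ext m phi1 phi2 : (forall nu, cyl nu -> phi1 nu = phi2 nu) ->
  forall nu, cyl nu -> iter m Uop phi1 nu = iter m Uop phi2 nu.
Proof.
move=> h; elim: m => [|m IH] nu c //=; first exact: h.
exact: U_ext.
Qed.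

Lemma D_Upow (hk : (1 <= k)%N) (hkn : (k < n)%N) b phi nu : cyl nu -> Dop (iter b Uop phi) nu = iter b Uop (Dop phi) nu.
Proof.
elim: b nu => [|b IH] nu c //=.
rewrite DU //; exact: U_ext.
Qed.

Definition one : (int -> int) -> nat := fun _ => 1%N.

Lemma Dpow_Upow (hk : (1 <= k)%N) (hkn : (k < n)%N) a : forall b nu, cyl nu ->
  iter a Dop (iter b Uop one) nu = iter (a + b) Uop one nu.
Proof.
elim: a => [|a IH] b nu c //=.
rewrite (D_ext (phi2 := iter (a + b) Uop one)) //; last by move=> ? ?; apply: IH.
rewrite D_Upow // -iterS iterSr; apply: Upow_ext => // mu cm.
rewrite /Dop /Uop; exact: count_eq.
Qed.

Lemma DU_final (hk : (1 <= k)%N) (hkn : (k < n)%N) m nu : cyl nu -> iter m Dop one nu = iter m Uop one nu.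
Proof. by move=> c; rewrite -[in RHS](addn0 m) -Dpow_Upow. Qed.

End Geo.

Section Boxes.
Variables (k n : nat).

Local Notation cyl := (cylindric k n).
Local Notation dd := (n%:Z - k%:Z).
Local Notation proj := (proj k n).


Definition col (lam mu : int -> int) (i : nat) : seq (int * int) :=
  [seq p <- [seq (i%:Z, mu i%:Z + (j.+1)%:Z) | j <- iota 0 `|lam i%:Z - mu i%:Z|%N]
     | in_skew lam mu p].

Lemma skewE lam mu : skew_boxes k lam mu = flatten [seq col lam mu i | i <- iota 0 k].
Proof. by []. Qed.

Lemma mem_col lam mu i c : c \in col lam mu i -> c.1 = i%:Z /\ in_skew lam mu c.
Proof.
rewrite mem_filter => /andP[h /mapP[t _ e]].
by rewrite e in h *.
Qed.

Lemma mem_B lam mu c :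
  (c \in skew_boxes k lam mu) = [&& 0 <= c.1, c.1 < k%:Z & in_skew lam mu c].
Proof.
apply/idP/idP.
  move/flattenP => [s /mapP[i hi ->] hc]; have [e h] := mem_col hc.
  rewrite e h mem_iota in hi *; rewrite andbT; lia.
case: c => x y /= /and3P[h0 h1 hs]; apply/flattenP.
exists (col lam mu `|x|%N); first by apply/mapP; exists `|x|%N => //; rewrite mem_iota; lia.
have ex : `|x|%N%:Z = x by lia.
rewrite /col mem_filter ex hs /=; apply/mapP.
move: hs; rewrite /in_skew /in_part /= => /andP[h2 h3].
exists (absz (y - mu x - 1)%R); first by rewrite mem_iota; lia.
congr (_, _); lia.
Qed.

Lemma proj1E q : (proj q).1 = (q.1 %% k%:Z)%Z.
Proof. by []. Qed.

Lemma in_part_proj nu (c : cyl nu) q : in_part nu (proj q) = in_part nu q.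
Proof.
case: q => x y; rewrite /in_part /proj /=.
have -> : x - (x %/ k%:Z)%Z * k%:Z = x + (- (x %/ k%:Z)%Z) * k%:Z by rewrite mulNr.
rewrite (cyl_shift c) mulNr opprK lerD2r //.
Qed.

Lemma in_skew_proj lam mu (cl : cyl lam) (cm : cyl mu) q :
  in_skew lam mu (proj q) = in_skew lam mu q.
Proof. by rewrite /in_skew !in_part_proj. Qed.

Lemma proj_canon c : 0 <= c.1 -> c.1 < k%:Z -> proj c = c.
Proof.
case: c => x y /= h0 h1; rewrite /proj /= divz_small; last by rewrite h0 /=; lia.
by rewrite !mul0r subr0 addr0.
Qed.

Lemma proj_ge0 (hk : (1 <= k)%N) q : 0 <= (proj q).1.
Proof. rewrite proj1E modz_ge0 //; lia. Qed.

Lemma proj_ltk (hk : (1 <= k)%N) q : (proj q).1 < k%:Z.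
Proof. rewrite proj1E; have := ltz_mod q.1 (kz_neq0 hk); lia. Qed.

Lemma proj_B (hk : (1 <= k)%N) lam mu (cl : cyl lam) (cm : cyl mu) q :
  in_skew lam mu q -> proj q \in skew_boxes k lam mu.
Proof. by move=> h; rewrite mem_B proj_ge0 // proj_ltk // in_skew_proj. Qed.

Lemma proj_row (hkn : (k < n)%N) x1 x2 y : proj (x1, y) = proj (x2, y) -> x1 = x2.
Proof.
rewrite /proj /= => -[e1 e2].
have e3 : (x1 %/ k%:Z)%Z * dd = (x2 %/ k%:Z)%Z * dd by move: e2; apply: addrI.
have e4 : (x1 %/ k%:Z)%Z = (x2 %/ k%:Z)%Z.
  by apply: (mulIf _ e3); lia.
by move: e1; rewrite e4 => /addIr.
Qed.

Lemma projb lam (c : cyl lam) j q : (j < k)%N ->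
  (proj q == (j%:Z, lam j%:Z)) = ((q.1 %% k%:Z)%Z == j%:Z) && (q.2 == lam q.1).
Proof.
move=> jk; case: q => x y; rewrite /proj /= xpair_eqE.
rewrite [in RHS](cyl_per c x) -/(modz x k%:Z).
case: eqP => //= ->.
by apply/eqP/eqP => h; lia.
Qed.

Lemma subE_small lam j (i : nat) : (i < k)%N ->
  subE k lam j i%:Z = if i == j then lam i%:Z - 1 else lam i%:Z.
Proof.
move=> ik; rewrite /subE; case: eqP => [e|ne]; first by subst i; rewrite E_jj.
by rewrite E_ij ?subr0 //; apply/eqP.
Qed.

Lemma col_other lam mu j i : (i < k)%N -> i != j ->
  col (subE k lam j) mu i = col lam mu i.
Proof.
move=> ik ne; rewrite /col subE_small // (negbTE ne).
apply: eq_in_filter => p /mapP[t _ ->].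
by rewrite /in_skew /in_part /subE /= E_ij // subr0.
Qed.

Lemma DEC lam mu j : (j < k)%N -> mu j%:Z < lam j%:Z ->
  exists P S, [/\ skew_boxes k lam mu = P ++ (j%:Z, lam j%:Z) :: S,
     skew_boxes k (subE k lam j) mu = P ++ S,
     (j%:Z, lam j%:Z) \notin P & (j%:Z, lam j%:Z) \notin S].
Proof.
move=> jk hj.
have ik : iota 0 k = iota 0 j ++ j :: iota j.+1 (k - j.+1).
  have -> : k = (j + (k - j.+1).+1)%N by lia.
  by rewrite iotaD add0n; congr (_ ++ _); congr (_ :: iota _ _); lia.
set D' := (absz (lam j%:Z - mu j%:Z)%R).-1.
set f := fun t : nat => (j%:Z, mu j%:Z + (t.+1)%:Z).
have cj : col lam mu j = [seq p <- map f (iota 0 D') | in_skew lam mu p] ++ [:: (j%:Z, lam j%:Z)].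
  rewrite /col -/f.
  have -> : absz (lam j%:Z - mu j%:Z)%R = (D' + 1)%N by rewrite /D'; lia.
  rewrite iotaD map_cat filter_cat /= add0n; congr (_ ++ _).
  have -> : f D' = (j%:Z, lam j%:Z) by rewrite /f /D'; congr (_, _); lia.
  by rewrite /in_skew /in_part /= lexx /= -ltNge hj.
have cj' : col (subE k lam j) mu j = [seq p <- map f (iota 0 D') | in_skew lam mu p].
  rewrite /col -/f subE_small // eqxx.
  have -> : absz (lam j%:Z - 1 - mu j%:Z)%R = D' by rewrite /D'; lia.
  apply: eq_in_filter => p /mapP[t ht ->]; rewrite mem_iota in ht.
  rewrite /in_skew /in_part /subE /= E_jj //.
  have h1 : mu j%:Z + (t.+1)%:Z <= lam j%:Z - 1 by rewrite /D' in ht; lia.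
  have h2 : mu j%:Z + (t.+1)%:Z <= lam j%:Z by lia.
  by rewrite h1 h2.
exists (flatten [seq col lam mu i | i <- iota 0 j] ++
        [seq p <- map f (iota 0 D') | in_skew lam mu p]).
exists (flatten [seq col lam mu i | i <- iota j.+1 (k - j.+1)]).
split.
- by rewrite skewE ik map_cat flatten_cat /= cj -!catA.
- rewrite skewE ik map_cat flatten_cat /= cj' -!catA; congr (_ ++ _).
    congr flatten; apply/eq_in_map => i; rewrite mem_iota => hi.
    apply: col_other; lia.
  congr (_ ++ _); congr flatten; apply/eq_in_map => i; rewrite mem_iota => hi.
  apply: col_other; lia.
- rewrite mem_cat negb_or; apply/andP; split.
    apply/negP => /flattenP [s /mapP[i hi ->] hc]; have [e _] := mem_col hc.
    rewrite mem_iota /= in hi e; lia.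
  rewrite mem_filter; apply/negP => /andP[_ /mapP[t ht]]; rewrite mem_iota in ht.
  move=> /(congr1 snd) /= e; rewrite /D' in ht; lia.
- apply/negP => /flattenP [s /mapP[i hi ->] hc]; have [e _] := mem_col hc.
  rewrite mem_iota /= in hi e; lia.
Qed.

Lemma nboxes_sub lam mu j : (j < k)%N -> mu j%:Z < lam j%:Z ->
  nboxes k lam mu = (nboxes k (subE k lam j) mu).+1.
Proof.
move=> jk hj; have [P [S [e1 e2 _ _]]] := DEC jk hj.
by rewrite /nboxes e1 e2 !size_cat /= addnS.
Qed.

Lemma diff_per lam mu (cl : cyl lam) (cm : cyl mu) x :
  lam x - mu x = lam (x %% k%:Z)%Z - mu (x %% k%:Z)%Z.
Proof.
rewrite (cyl_per cl x) (cyl_per cm x).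
by rewrite opprB addrA subrK.
Qed.

Lemma lt_col (hk : (1 <= k)%N) lam mu (cl : cyl lam) (cm : cyl mu) x :
  mu x < lam x -> exists2 j, (j < k)%N & ((x %% k%:Z)%Z = j%:Z /\ mu j%:Z < lam j%:Z).
Proof.
move=> h; exists `|(x %% k%:Z)%Z|%N.
  have := ltz_mod x (kz_neq0 hk); have := modz_ge0 x (kz_neq0 hk); lia.
have e : `|(x %% k%:Z)%Z|%N%:Z = (x %% k%:Z)%Z.
  have := modz_ge0 x (kz_neq0 hk); lia.
rewrite e; split => //; have := diff_per cl cm x; lia.
Qed.

Lemma nboxes0 (hk : (1 <= k)%N) lam mu (cl : cyl lam) (cm : cyl mu) : subpart mu lam ->
  nboxes k lam mu = 0%N -> lam = mu.
Proof.
move=> sub h; apply/funext => x; apply/eqP; rewrite eq_le sub andbT.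
rewrite leNgt; apply/negP => hx.
have [j jk [_ hj]] := lt_col hk cl cm hx.
by rewrite (nboxes_sub jk hj) in h.
Qed.

End Boxes.

Section Tab.
Variables (k n : nat).
Local Notation proj := (proj k n).

Definition tvc N (B : seq (int * int)) (R : {ffun 'I_N -> 'I_N}) (c : int * int) : nat :=
  match (insub (index c B) : option 'I_N) with Some i => (R i).+1 | None => 0%N end.
Definition tv N B (R : {ffun 'I_N -> 'I_N}) p := tvc B R (proj p).
Definition stdg N B (isk : int * int -> bool) (R : {ffun 'I_N -> 'I_N}) : Prop :=
  injective R /\
  (forall x y1 y2 : int, isk (x, y1) -> isk (x, y2) -> y1 < y2 ->
     (tv B R (x, y1) <= tv B R (x, y2))%N) /\
  (forall x1 x2 y : int, isk (x1, y) -> isk (x2, y) -> x1 < x2 ->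
     (tv B R (x1, y) < tv B R (x2, y))%N).
Definition gcount N B isk := #|[set R : {ffun 'I_N -> 'I_N} | `[< @stdg N B isk R >]]|.

Lemma f_skewE lam mu :
  f_skew k n lam mu = gcount (nboxes k lam mu) (skew_boxes k lam mu) (in_skew lam mu).
Proof. reflexivity. Qed.

Lemma tvc_some N B (R : {ffun 'I_N -> 'I_N}) c (h : (index c B < N)%N) :
  tvc B R c = (R (Ordinal h)).+1.
Proof. by rewrite /tvc insubT. Qed.

Lemma tvc_none N B (R : {ffun 'I_N -> 'I_N}) c : ~~ (index c B < N)%N -> tvc B R c = 0%N.
Proof. by move=> h; rewrite /tvc insubN. Qed.

Lemma tvc_le N B (R : {ffun 'I_N -> 'I_N}) c : (tvc B R c <= N)%N.
Proof. by rewrite /tvc; case: insub => // i. Qed.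

Lemma tvc_inj N B (R : {ffun 'I_N -> 'I_N}) c1 c2 : size B = N -> injective R ->
  c1 \in B -> c2 \in B -> tvc B R c1 = tvc B R c2 -> c1 = c2.
Proof.
move=> sB iR h1 h2.
have i1 : (index c1 B < N)%N by rewrite -sB index_mem.
have i2 : (index c2 B < N)%N by rewrite -sB index_mem.
rewrite (tvc_some _ i1) (tvc_some _ i2) => -[e].
have /(congr1 val) /= e2 := iR _ _ (val_inj e).
by rewrite -(nth_index c1 h1) -(nth_index c1 h2) e2.
Qed.

Section Split.
Variables (N : nat) (P S : seq (int * int)) (b : int * int).
Variables (hb : b \notin P) (hs : size (P ++ S) = N).

Definition p0 : 'I_N.+1 := inord (size P).

Lemma p0E : (p0 : nat) = size P.
Proof. rewrite /p0 inordK //; move: hs; rewrite size_cat; lia. Qed.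

Lemma index_b : index b (P ++ b :: S) = size P.
Proof. by rewrite index_cat (negbTE hb) /= eqxx addn0. Qed.

Lemma index_nb c : c != b ->
  index c (P ++ b :: S) = bump (size P) (index c (P ++ S)).
Proof.
move=> ne; rewrite !index_cat; case: ifP => hc.
  by rewrite /bump; have := index_mem c P; rewrite hc; case: leqP.
rewrite /= eq_sym (negbTE ne) /bump leq_addr addnS add1n //.
Qed.

Definition relR (R : {ffun 'I_N.+1 -> 'I_N.+1}) (R' : {ffun 'I_N -> 'I_N}) :=
  R p0 = ord_max /\ forall i : 'I_N, R (lift p0 i) = lift ord_max (R' i).

Lemma TV R R' : relR R R' -> forall c,
  tvc (P ++ b :: S) R c = if c == b then N.+1 else tvc (P ++ S) R' c.
Proof.
move=> [h0 h1] c; case: eqP => [->|/eqP ne].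
  have hi : (index b (P ++ b :: S) < N.+1)%N by rewrite index_b -p0E.
  rewrite (tvc_some _ hi).
  have -> : Ordinal hi = p0 by apply: val_inj; rewrite /= index_b p0E.
  by rewrite h0.
case: (ltnP (index c (P ++ S)) N) => hx.
  rewrite (tvc_some _ hx).
  have hi : (index c (P ++ b :: S) < N.+1)%N.
    rewrite index_nb // /bump; case: (leqP (size P) (index c (P ++ S))) => /= _; lia.
  rewrite (tvc_some _ hi).
  have -> : Ordinal hi = lift p0 (Ordinal hx) by apply: val_inj; rewrite /= index_nb // p0E.
  rewrite h1 /= /bump; have := ltn_ord (R' (Ordinal hx)).
  by case: (leqP N (R' (Ordinal hx))) => /= h; [lia | rewrite add0n].
rewrite !tvc_none //; first by rewrite -leqNgt.
rewrite index_nb // /bump -leqNgt; move: hx hs; rewrite size_cat.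
case: (leqP (size P) (index c (P ++ S))) => /= h; lia.
Qed.

Variables (isk isk' : int * int -> bool).
Variable H1 : forall q, isk' q = isk q && (proj q != b).
Variable H3 : forall x y1 y2, isk (x, y1) -> proj (x, y1) = b -> y1 < y2 -> ~~ isk (x, y2).
Variable H5 : forall x1 x2 y, isk (x1, y) -> proj (x1, y) = b -> x1 < x2 -> ~~ isk (x2, y).
Variable Hrow : forall x1 x2 y, proj (x1, y) = proj (x2, y) -> x1 = x2.

Lemma tv_eq R R' q : relR R R' -> isk' q ->
  tv (P ++ b :: S) R q = tv (P ++ S) R' q.
Proof.
move=> r; rewrite H1 => /andP[_ ne]; rewrite /tv (TV r) (negbTE ne) //.
Qed.

Lemma std_down R R' : relR R R' -> stdg (P ++ b :: S) isk R -> stdg (P ++ S) isk' R'.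
Proof.
move=> r [iR [hc hr]]; split; [|split].
- move=> i1 i2 e; apply: (@lift_inj _ p0); apply: iR.
  by rewrite !r.2 e.
- move=> x y1 y2 h1 h2 lt; rewrite -(tv_eq r h1) -(tv_eq r h2).
  by apply: hc lt; [move: h1|move: h2]; rewrite H1 => /andP[].
- move=> x1 x2 y h1 h2 lt; rewrite -(tv_eq r h1) -(tv_eq r h2).
  by apply: hr lt; [move: h1|move: h2]; rewrite H1 => /andP[].
Qed.

Lemma std_up R R' : relR R R' -> stdg (P ++ S) isk' R' -> stdg (P ++ b :: S) isk R.
Proof.
move=> r [iR [hc hr]]; split; [|split].
- move=> i1 i2.
  case: (unliftP p0 i1) => [j1 ->|->]; case: (unliftP p0 i2) => [j2 ->|->] //;
    rewrite ?r.1 ?r.2.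
  + by move/lift_inj/iR => ->.
  + by move/eqP; rewrite eq_sym (negbTE (neq_lift _ _)).
  + by move/eqP; rewrite (negbTE (neq_lift _ _)).
- move=> x y1 y2 h1 h2 lt; rewrite /tv !(TV r).
  case: eqP => e1; case: eqP => e2.
  + by [].
  + by move: (H3 h1 e1 lt); rewrite h2.
  + by apply: leq_trans (tvc_le _ _ _) _.
  + have := hc x y1 y2; rewrite /tv; apply => //; rewrite H1 ?h1 ?h2 /=; by apply/eqP.
- move=> x1 x2 y h1 h2 lt; rewrite /tv !(TV r).
  case: eqP => e1; case: eqP => e2.
  + by move: lt; rewrite (Hrow (etrans e1 (esym e2))) ltxx.
  + by move: (H5 h1 e1 lt); rewrite h2.
  + by rewrite ltnS tvc_le.
  + have := hr x1 x2 y; rewrite /tv; apply => //; rewrite H1 ?h1 ?h2 /=; by apply/eqP.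
Qed.

Definition ext (R' : {ffun 'I_N -> 'I_N}) : {ffun 'I_N.+1 -> 'I_N.+1} :=
  [ffun i => if unlift p0 i is Some i' then lift ord_max (R' i') else ord_max].

Lemma ext_rel R' : relR (ext R') R'.
Proof.
split; first by rewrite ffunE unlift_none.
by move=> i; rewrite ffunE liftK.
Qed.

Lemma ext_inj : injective ext.
Proof.
move=> R1 R2 e; apply/ffunP => i.
have := congr1 (fun R : {ffun 'I_N.+1 -> 'I_N.+1} => R (lift p0 i)) e; rewrite /= (ext_rel R1).2 (ext_rel R2).2.
exact: lift_inj.
Qed.

Lemma card_split :
  #|[set R : {ffun 'I_N.+1 -> 'I_N.+1} | `[< stdg (P ++ b :: S) isk R >] && (R p0 == ord_max)]|
  = gcount N (P ++ S) isk'.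
Proof.
rewrite /gcount -(card_imset _ ext_inj); apply: eq_card => R.
rewrite !inE; apply/idP/idP.
  move=> /andP[/asboolP hR /eqP h0].
  pose R' : {ffun 'I_N -> 'I_N} := [ffun i => odflt i (unlift ord_max (R (lift p0 i)))].
  have r : relR R R'.
    split => // i; rewrite ffunE.
    have ne : ord_max != R (lift p0 i).
      rewrite -h0; apply/eqP => /hR.1 /eqP; by rewrite (negbTE (neq_lift _ _)).
    by case: (unlift_some ne) => v -> ->.
  apply/imsetP; exists R'; first by rewrite inE; apply/asboolP; exact: std_down hR.
  apply/ffunP => i; case: (unliftP p0 i) => [j ->|->].
    by rewrite (ext_rel R').2 r.2.
  by rewrite (ext_rel R').1 r.1.
move=> /imsetP[R' hR' ->]; rewrite inE in hR'; move/asboolP: hR' => hR'.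
apply/andP; split; last by rewrite (ext_rel R').1.
by apply/asboolP; apply: std_up (ext_rel R') hR'.
Qed.

End Split.
End Tab.

Section Rec.
Variables (k n : nat).
Local Notation cyl := (cylindric k n).
Local Notation dd := (n%:Z - k%:Z).
Local Notation proj := (proj k n).

Lemma uniq_cols lam mu m r : uniq (flatten [seq col lam mu i | i <- iota m r]).
Proof.
elim: r m => [|r IH] m //=; rewrite cat_uniq IH andbT; apply/andP; split.
  rewrite /col filter_uniq // map_inj_uniq ?iota_uniq // => t1 t2 [] /addrI [].
  by [].
apply/hasPn => c /flattenP[s /mapP[i hi ->] hc]; apply/negP => /mem_col [e _].
have [e' _] := mem_col hc; rewrite mem_iota in hi; lia.
Qed.

Lemma uniq_B lam mu : uniq (skew_boxes k lam mu).
Proof. exact: uniq_cols. Qed.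

Lemma G1 lam mu (cl : cyl lam) j q : (j < k)%N ->
  in_skew (subE k lam j) mu q = in_skew lam mu q && (proj q != (j%:Z, lam j%:Z)).
Proof.
move=> jk; rewrite (projb cl) // /in_skew /in_part /subE /E.
case: eqP => /= _; last by rewrite subr0 andbT.
move: (q.2) (lam q.1) (mu q.1) => a b c.
apply/idP/idP; lia.
Qed.


Lemma H3L lam mu (cl : cyl lam) j : (j < k)%N -> forall x y1 y2,
  in_skew lam mu (x, y1) -> proj (x, y1) = (j%:Z, lam j%:Z) -> y1 < y2 ->
  ~~ in_skew lam mu (x, y2).
Proof.
move=> jk x y1 y2 _ /eqP; rewrite (projb cl) // => /andP[_ /eqP /= ey] lt.
by rewrite /in_skew /in_part /= -ey leNgt lt.
Qed.

Lemma rem_at lam (cl : cyl lam) j x : (j < k)%N -> lam (j%:Z + 1) < lam j%:Z ->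
  (x %% k%:Z)%Z = j%:Z -> lam (x + 1) < lam x.
Proof.
move=> jk hj e.
have ex : x = j%:Z + (x %/ k%:Z)%Z * k%:Z by rewrite {1}(divz_eq x k%:Z) e addrC.
rewrite ex; move: (x %/ k%:Z)%Z => t.
by rewrite (cyl_shift cl) addrAC (cyl_shift cl) ltrD2r.
Qed.

Lemma H5L lam mu (cl : cyl lam) j : (j < k)%N -> lam (j%:Z + 1) < lam j%:Z ->
  forall x1 x2 y, in_skew lam mu (x1, y) -> proj (x1, y) = (j%:Z, lam j%:Z) -> x1 < x2 ->
  ~~ in_skew lam mu (x2, y).
Proof.
move=> jk hj x1 x2 y _ /eqP; rewrite (projb cl) // => /andP[/eqP /= e1 /eqP /= ey] lt.
have h1 := rem_at cl jk hj e1.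
have h2 : lam x2 <= lam (x1 + 1) by apply: (cyl_mono cl); lia.
rewrite /in_skew /in_part /= ey; apply/negP => /andP[h _]; lia.
Qed.

Definition atj lam mu N (R : {ffun 'I_N.+1 -> 'I_N.+1}) (j : nat) : bool :=
  [&& `[< cyl (subE k lam j) >], mu j%:Z < lam j%:Z &
      R (inord (index (j%:Z, lam j%:Z) (skew_boxes k lam mu))) == ord_max].

Lemma memb lam mu j : (j < k)%N -> mu j%:Z < lam j%:Z ->
  (j%:Z, lam j%:Z) \in skew_boxes k lam mu.
Proof.
move=> jk h; rewrite mem_B /in_skew /in_part /= lexx -ltNge h !andbT; lia.
Qed.

Lemma UN lam mu N (R : {ffun 'I_N.+1 -> 'I_N.+1}) j1 j2 :
  nboxes k lam mu = N.+1 -> injective R -> (j1 < k)%N -> (j2 < k)%N ->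
  atj lam mu R j1 -> atj lam mu R j2 -> j1 = j2.
Proof.
move=> hN iR jk1 jk2 /and3P[_ h1 /eqP e1] /and3P[_ h2 /eqP e2].
have m1 := memb jk1 h1; have m2 := memb jk2 h2.
have := iR _ _ (etrans e1 (esym e2)) => /(congr1 val) /=.
rewrite !inordK -?hN ?index_mem // => /(congr1 (nth (0, 0) (skew_boxes k lam mu))).
rewrite !nth_index // => -[e _]; lia.
Qed.



Lemma EX (hk : (1 <= k)%N) lam mu (cl : cyl lam) (cm : cyl mu) N (R : {ffun 'I_N.+1 -> 'I_N.+1}) :
  nboxes k lam mu = N.+1 -> stdg k n (skew_boxes k lam mu) (in_skew lam mu) R ->
  exists2 j, (j < k)%N & atj lam mu R j.
Proof.
move=> hN [iR [hc hr]].
set B := skew_boxes k lam mu.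
have sB : size B = N.+1 := hN.
case: (injF_bij iR) => g Kfg Kgf.
set i0 := g ord_max.
have Ri0 : R i0 = ord_max := Kgf ord_max.
have [x [y Ec]] : exists x y, nth (0, 0) B i0 = (x, y).
  by exists (nth (0, 0) B i0).1, (nth (0, 0) B i0).2; case: nth.
have cB : (x, y) \in B by rewrite -Ec mem_nth // sB.
have ic : index (x, y) B = i0 by rewrite -Ec index_uniq ?uniq_B ?sB.
have hi : (index (x, y) B < N.+1)%N by rewrite ic.
have tc : tvc B R (x, y) = N.+1.
  rewrite (tvc_some _ hi); have -> : Ordinal hi = i0 by apply: val_inj.
  by rewrite Ri0.
move: (cB); rewrite mem_B /= => /and3P[h0 h1 sxy].
have tvxy : tv k n B R (x, y) = N.+1 by rewrite /tv proj_canon.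
have ey : y = lam x.
  move: (sxy); rewrite /in_skew /in_part /= => /andP[hy hmu].
  apply/eqP; rewrite eq_le hy /=; rewrite leNgt; apply/negP => lt.
  have s' : in_skew lam mu (x, y + 1) by rewrite /in_skew /in_part /=; apply/andP; split; lia.
  have lt1 : y < y + 1 by lia.
  have := hc x y (y + 1) sxy s' lt1; rewrite tvxy /tv proj_canon // => le.
  have le2 := tvc_le B R (x, y + 1).
  have cB' : (x, y + 1) \in B by rewrite mem_B s' h0 h1.
  have e : tvc B R (x, y) = tvc B R (x, y + 1) by rewrite tc; apply/eqP; rewrite eqn_leq le le2.
  have := tvc_inj sB iR cB cB' e => -[]; lia.
pose j := absz x.
have xj : x = j%:Z by rewrite /j; lia.
exists j; first by rewrite /j; lia.
move: (sxy); rewrite /in_skew /in_part /= => /andP[hy hmu].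
apply/and3P; split.
- apply/asboolP; apply: cyl_subE => //; first by rewrite /j; lia.
  rewrite ltNge; apply/negP => hle.
  have s'' : in_skew lam mu (x + 1, y).
    rewrite /in_skew /in_part /=; apply/andP; split; first by rewrite ey xj.
    have lt2 : x <= x + 1 by lia.
    have := cyl_mono cm lt2; lia.
  have lt1 : x < x + 1 by lia.
  have := hr x (x + 1) y sxy s'' lt1; rewrite tvxy.
  have := tvc_le B R (proj (x + 1, y)); rewrite /tv -/B => a b.
  by have := leq_trans b a; rewrite ltnn.
- rewrite -xj; lia.
- rewrite -xj -ey ic inord_val Ri0 //.
Qed.


Lemma card_sum (T : finType) (a p : pred T) :
  #|[set x | a x && p x]| = (\sum_(x | a x) (p x : nat))%N.
Proof.
rewrite -sum1_card big_mkcond [RHS]big_mkcond; apply: eq_bigr => x _.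
by rewrite inE; case: (a x); case: (p x).
Qed.

Lemma frec (hk : (1 <= k)%N) (hkn : (k < n)%N) lam mu (cl : cyl lam) (cm : cyl mu)
  N : nboxes k lam mu = N.+1 ->
  f_skew k n lam mu = \sum_(j < k) (if `[< cyl (subE k lam j) >] && (mu j%:Z < lam j%:Z)
                                    then f_skew k n (subE k lam j) mu else 0%N).
Proof.
move=> hN; rewrite f_skewE /gcount hN.
set B := skew_boxes k lam mu.
set isk := in_skew lam mu.
transitivity (\sum_(R : {ffun 'I_N.+1 -> 'I_N.+1} | `[< stdg k n B isk R >])
                 \sum_(j < k) (atj lam mu R j : nat))%N.
  rewrite -sum1_card; apply: eq_big => [R|R]; first by rewrite inE.
  rewrite inE => /asboolP hR; have [j0 jk0 a0] := EX hk cl cm hN hR.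
  rewrite (bigD1 (Ordinal jk0)) //= a0 big1 // => j ne.
  rewrite (_ : atj lam mu R j = false) //; apply/negbTE/negP => aj; move: ne; rewrite -val_eqE /=.
  by rewrite (UN hN hR.1 (ltn_ord j) jk0 aj a0) eqxx.
rewrite exchange_big /=; apply: eq_bigr => j _.
have jk := ltn_ord j.
rewrite -card_sum.
case: (boolP (`[< cyl (subE k lam j) >] && (mu j%:Z < lam j%:Z))) => [/andP[hc hj]|hn]; last first.
  apply: eq_card0 => R; rewrite !inE /atj.
  by move: hn; rewrite negb_and => /orP[/negbTE -> | /negbTE ->]; rewrite ?andbF.
have [P [S [e1 e2 hbP hbS]]] := DEC jk hj.
have hs : size (P ++ S) = N.
  by move: hN; rewrite /nboxes e1 !size_cat /= addnS => -[].
have hN' : nboxes k (subE k lam j) mu = N.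
  by rewrite /nboxes e2.
rewrite f_skewE hN' e2 -(card_split hbP hs (fun q => G1 mu cl q jk)
   (H3L (mu := mu) cl jk) (H5L (mu := mu) cl jk (subE_rem hkn cl jk (asboolW hc))) (proj_row hkn)).
apply: eq_card => R; rewrite !inE /atj hc hj /= /B /isk e1 index_b //.
Qed.

End Rec.

Section Final.
Variables (k n : nat).
Local Notation cyl := (cylindric k n).
Local Open Scope classical_set_scope.

Lemma colbound lam mu i : subpart mu lam -> (i < k)%N ->
  (absz (lam i%:Z - mu i%:Z) <= nboxes k lam mu)%N.
Proof.
move=> sub ik.
have hs : {subset col lam mu i <= skew_boxes k lam mu}.
  move=> c hc; apply/flattenP; exists (col lam mu i) => //.
  by apply/mapP; exists i => //; rewrite mem_iota.
have u : uniq (col lam mu i) by have := uniq_cols lam mu i 1; rewrite /= cats0.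
have := uniq_leq_size u hs; rewrite /nboxes.
rewrite /col (all_filterP _) ?size_map ?size_iota //.
apply/allP => p /mapP[t ht ->]; rewrite mem_iota in ht.
have := sub i%:Z; rewrite /in_skew /in_part /=; lia.
Qed.

Lemma fin_box (hk : (1 <= k)%N) alpha m (P : set (int -> int)) : cyl alpha ->
  (forall nu, P nu -> cyl nu /\ forall i, (i < k)%N -> (absz (nu i%:Z - alpha i%:Z) <= m)%N) ->
  finite_set P.
Proof.
move=> ca hP.
pose h (t : {ffun 'I_k -> 'I_(m + m).+1}) : int -> int := fun x =>
  alpha x + (match (insub (absz (x %% k%:Z)%Z) : option 'I_k) with
             | Some i => (t i : nat)%:Z | None => 0 end - m%:Z).
apply: (sub_finite_set _ (finite_image h (@finite_finset _ setT))).
move=> nu /hP [cn hb].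
exists [ffun i : 'I_k => inord (absz (nu i%:Z - alpha i%:Z + m%:Z)) : 'I_(m + m).+1] => //.
apply/funext => x; rewrite /h.
have kz := kz_neq0 hk.
have kp : 0 < k%:Z by lia.
have hx : (absz (x %% k%:Z)%Z < k)%N.
  by rewrite -ltz_nat abszE ger0_norm ?modz_ge0 ?ltz_pmod.
rewrite insubT ffunE /=.
have ex : (absz (x %% k%:Z)%Z)%:Z = (x %% k%:Z)%Z by have := modz_ge0 x kz; lia.
have hb' := hb _ hx; rewrite ex in hb'.
rewrite ex inordK; last by lia.
have := diff_per cn ca x.
move: hb'; move: (nu (x %% k%:Z)%Z) (alpha (x %% k%:Z)%Z) => a b hb' e.
lia.
Qed.

Lemma finM (hk : (1 <= k)%N) alpha m : cyl alpha ->
  finite_set [set mu | cyl mu /\ subpart mu alpha /\ nboxes k alpha mu = m].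
Proof.
move=> ca; apply: (fin_box (m := m) hk ca) => mu [cm [sub hm]]; split => // i ik.
have := colbound sub ik; rewrite hm; lia.
Qed.

Lemma finL (hk : (1 <= k)%N) alpha m : cyl alpha ->
  finite_set [set lam | cyl lam /\ subpart alpha lam /\ nboxes k lam alpha = m].
Proof.
move=> ca; apply: (fin_box (m := m) hk ca) => lam [cl [sub hm]]; split => // i ik.
have := colbound sub ik; rewrite hm; lia.
Qed.

Lemma fsum_exch (T : choiceType) (A : set T) (F : T -> 'I_k -> nat) : finite_set A ->
  \sum_(x \in A) \sum_(j < k) F x j = \sum_(j < k) \sum_(x \in A) F x j.
Proof.
move=> fA; rewrite fsbig_finite //.
under [RHS]eq_bigr do rewrite fsbig_finite //.
exact: exchange_big.
Qed.

Lemma nboxes_refl alpha : nboxes k alpha alpha = 0%N.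
Proof.
rewrite /nboxes skewE; elim: (iota 0 k) => //= i s IH.
by rewrite size_cat IH /col subrr.
Qed.

Lemma f_refl alpha : f_skew k n alpha alpha = 1%N.
Proof.
rewrite f_skewE /gcount nboxes_refl.
rewrite (eq_card (B := predT)); first by rewrite card_ffun !card_ord.
move=> R; rewrite !inE; apply/asboolP; split; [|split].
- by move=> i; case: i.
- by move=> x y1 y2; rewrite /in_skew /in_part /= andbN.
- by move=> x1 x2 y; rewrite /in_skew /in_part /= andbN.
Qed.


Lemma in_setb (T : Type) (p : T -> bool) x : (x \in [set y | p y]) = p x.
Proof. by apply/idP/idP => [/set_mem //|h]; apply: mem_set. Qed.

Lemma subpart_sub alpha mu (ca : cyl alpha) (cm : cyl mu) j :
  subpart mu alpha -> mu j%:Z < alpha j%:Z -> subpart mu (subE k alpha j).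
Proof.
move=> sub hj x; rewrite /subE /E; case: eqP => e; last by rewrite subr0.
have := diff_per ca cm x; rewrite e; have := sub x; lia.
Qed.

Lemma sub_subE alpha j mu : subpart mu (subE k alpha j) -> subpart mu alpha.
Proof. move=> h x; have := h x; have := E_ge0 k j x; rewrite /subE; lia. Qed.

Lemma Mstep alpha (ca : cyl alpha) j (jk : (j < k)%N) (cs : cyl (subE k alpha j)) m :
  [set mu | cyl mu /\ subpart mu alpha /\ nboxes k alpha mu = m.+1] `&`
    [set mu | mu j%:Z < alpha j%:Z] =
  [set mu | cyl mu /\ subpart mu (subE k alpha j) /\ nboxes k (subE k alpha j) mu = m].
Proof.
apply/seteqP; split => mu /=.
  move=> [[cm [sub hN]] hj]; split => //; split; first exact: subpart_sub.
  by have := nboxes_sub jk hj; rewrite hN => -[].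
move=> [cm [sub hN]].
have hj : mu j%:Z < alpha j%:Z by have := sub j%:Z; rewrite /subE E_jj //; lia.
split => //; split => //; split; first exact: sub_subE sub.
by rewrite (nboxes_sub jk hj) hN.
Qed.

Lemma L1 (hk : (1 <= k)%N) (hkn : (k < n)%N) m : forall alpha, cyl alpha ->
  \sum_(mu \in [set mu | cyl mu /\ subpart mu alpha /\ nboxes k alpha mu = m])
     f_skew k n alpha mu = iter m (Dop k n) one alpha.
Proof.
elim: m => [|m IH] alpha ca.
  have -> : [set mu | cyl mu /\ subpart mu alpha /\ nboxes k alpha mu = 0%N] = [set alpha].
    apply/seteqP; split => mu /=.
      by move=> [cm [sub hN]]; rewrite (nboxes0 hk ca cm sub hN).
    by move=> ->; split => //; split; [move=> x|exact: nboxes_refl].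
  by rewrite fsbig_set1 f_refl.
rewrite (eq_fsbigr (fun mu => \sum_(j < k) (if `[< cyl (subE k alpha j) >] && (mu j%:Z < alpha j%:Z)
                                    then f_skew k n (subE k alpha j) mu else 0%N))); last first.
  by move=> mu /set_mem /= [cm [sub hN]]; exact: (frec hk hkn ca cm hN).
rewrite fsum_exch; last exact: finM.
rewrite iterS /Dop; apply: eq_bigr => j _.
have jk := ltn_ord j.
case: (asboolP (cyl (subE k alpha j))) => cs /=; last by rewrite fsbig1.
rewrite -IH // -(Mstep ca jk cs) (fsbig_mkcondr _ _ [set mu | mu j%:Z < alpha j%:Z]).
by apply: eq_fsbigr => mu _; rewrite in_setb.
Qed.

Lemma Lstep alpha (ca : cyl alpha) j (jk : (j < k)%N) m :
  (fun l => addE k l j) @` ([set l | cyl l /\ subpart alpha l /\ nboxes k l alpha = m] `&`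
     [set l | `[< cyl (addE k l j) >]]) =
  [set l | cyl l /\ subpart alpha l /\ nboxes k l alpha = m.+1] `&`
     [set l | `[< cyl (subE k l j) >] && (alpha j%:Z < l j%:Z)].
Proof.
apply/seteqP; split => l /=.
  move=> [l' [[cl' [sub hN]] /asboolP cs] <-].
  have hj : alpha j%:Z < addE k l' j j%:Z by rewrite /addE E_jj //; have := sub j%:Z; lia.
  split; last by rewrite addEK hj andbT; apply/asboolP.
  split => //; split; first by move=> x; have := sub x; have := E_ge0 k j x; rewrite /addE; lia.
  by rewrite (nboxes_sub jk hj) addEK hN.
move=> [[cl [sub hN]] /andP[/asboolP cs hj]].
exists (subE k l j); last exact: subEK.
split; last by rewrite subEK; apply/asboolP.
split => //; split; first exact: subpart_sub.
by have := nboxes_sub jk hj; rewrite hN => -[].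
Qed.

Lemma L2 (hk : (1 <= k)%N) (hkn : (k < n)%N) m : forall phi alpha, cyl alpha ->
  \sum_(l \in [set l | cyl l /\ subpart alpha l /\ nboxes k l alpha = m])
     (f_skew k n l alpha * phi l)%N = iter m (Uop k n) phi alpha.
Proof.
elim: m => [|m IH] phi alpha ca.
  have -> : [set l | cyl l /\ subpart alpha l /\ nboxes k l alpha = 0%N] = [set alpha].
    apply/seteqP; split => l /=.
      by move=> [cl [sub hN]]; rewrite (nboxes0 hk cl ca sub hN).
    by move=> ->; split => //; split; [move=> x|exact: nboxes_refl].
  by rewrite fsbig_set1 f_refl mul1n.
rewrite (eq_fsbigr (fun l => \sum_(j < k) (if `[< cyl (subE k l j) >] && (alpha j%:Z < l j%:Z)
                                    then (f_skew k n (subE k l j) alpha * phi l)%N else 0%N))); last first.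
  move=> l /set_mem /= [cl [sub hN]]; rewrite (frec hk hkn cl ca hN) big_distrl /=.
  by apply: eq_bigr => j _; case: ifP.
rewrite fsum_exch; last exact: finL.
rewrite iterSr -IH //.
rewrite (eq_fsbigr (fun l => \sum_(j < k) (if `[< cyl (addE k l j) >]
                                    then (f_skew k n l alpha * phi (addE k l j))%N else 0%N))); last first.
  move=> l _; rewrite /Uop big_distrr /=.
  by apply: eq_bigr => j _; case: ifP => //; rewrite muln0.
rewrite fsum_exch; last exact: finL.
apply: eq_bigr => j _; have jk := ltn_ord j.
under eq_fsbigr => l _ do rewrite -[`[< cyl (subE k l j) >] && _](in_setb (fun l => `[< cyl (subE k l j) >] && (alpha j%:Z < l j%:Z))).
under [RHS]eq_fsbigr => l _ do rewrite -[`[< cyl (addE k l j) >]](in_setb (fun l => `[< cyl (addE k l j) >])).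
rewrite -!fsbig_mkcondr.
under eq_fsbigl do rewrite -(Lstep ca jk m).
rewrite fsbig_image; last first.
  move=> a b _ _ e; apply/funext => x.
  by have := congr1 (fun f => f x) e; rewrite /addE => /addIr.
by apply: eq_fsbigr => l _; rewrite addEK.
Qed.

End Final.

Unset Implicit Arguments.
Local Open Scope classical_set_scope.

Theorem mainTheorem7 (k n : nat) (hk : (1 <= k)%N) (hkn : (k < n)%N)
  (alpha : int -> int) (halpha : cylindric k n alpha) (m : nat) :
  (\sum_(mu \in [set mu | cylindric k n mu /\ subpart mu alpha /\ nboxes k alpha mu = m])
      f_skew k n alpha mu)%N
  = (\sum_(lam \in [set lam | cylindric k n lam /\ subpart alpha lam /\ nboxes k lam alpha = m])
      f_skew k n lam alpha)%N.
Proof.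
rewrite (L1 hk hkn m halpha) (DU_final hk hkn m halpha) -(L2 hk hkn m one halpha).
by apply: eq_fsbigr => l _; rewrite /one muln1.
Qed.
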